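(* Let $M$ be a finite set of graphs such that $M\cap\mathcal{S}=\emptyset$. Then there exists an integer $r\ge3$ such that $\mathcal{S}_r\subseteq \mathrm{SiFree}(M)$.
   Context: All graphs are finite and simple. For graphs $G_1=(V_1,E_1)$, $G_2=(V_2,E_2)$, $G_1\cap G_2=(V_1\cap V_2, E_1\cap E_2)$. For a graph $G=(V,E)$ and an injective map $\alpha$ on $V$, $G^{\alpha}$ has vertex set $\alpha(V)$ and edge set $\{\{\alpha(v),\alpha(w)\}: \{v,w\}\in E\}$. We write $G\xrightarrow{\cap} H$ if $H$ is (isomorphic to) $G^{\alpha_1}\cap\cdots\cap G^{\alpha_k}$ for some $k\ge1$ and injective maps $\alpha_1,\dots,\alpha_k$ on $V(G)$. For a set $M$ of graphs, $\mathrm{SiFree}(M)$ is the class of graphs $G$ such that $G\xrightarrow{\cap}F$ holds for no $F\in M$. $\mathcal{S}$ is the class of forests in which every connected component is a tree with at most three leaves (its members are called tripods). $H_0=K_{1,4}$, and for $k\ge1$, $H_k$ is the graph obtained from two vertex-disjoint copies of the path $P_3$ by joining their middle vertices by a path with $k$ edges (with $k-1$ new internal vertices). For $k\ge3$, $\mathcal{S}_k$ is the class of graphs containing none of $C_3,\dots,C_k,H_0,H_1,\dots,H_k$ as a (not necessarily induced) subgraph. *)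

(* Defs.v *)
From Stdlib Require List.
From mathcomp Require Import all_boot.
Set Implicit Arguments. Unset Strict Implicit. Unset Printing Implicit Defensive.

Record sgraph := FGraph {
  gV :> finType;
  gE : rel gV;
  gE_sym : symmetric gE;
  gE_irr : irreflexive gE }.

Definition symrel (T : finType) (r : rel T) : rel T :=
  fun x y => (x != y) && (r x y || r y x).

Lemma symrel_sym (T : finType) (r : rel T) : symmetric (symrel r).
Proof. by move=> x y; rewrite /symrel eq_sym orbC. Qed.

Lemma symrel_irr (T : finType) (r : rel T) : irreflexive (symrel r).
Proof. by move=> x; rewrite /symrel eqxx. Qed.

Definition mkgraph (T : finType) (r : rel T) : sgraph :=
  @FGraph T (symrel r) (@symrel_sym T r) (@symrel_irr T r).

(** Cycle C_n on vertices 0..n-1 (edges i -- i+1 mod n); a cycle for n >= 3. *)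
Definition Cgraph (n : nat) : sgraph :=
  mkgraph (fun i j : 'I_n => val j == (val i).+1 %% n).

(** H_0 = K_{1,4} (centre 0, leaves 1..4).
    H_k (k >= 1): path p_0 -- ... -- p_k on vertices 0..k, plus vertices
    k+1, k+2 adjacent to p_0 and k+3, k+4 adjacent to p_k; i.e. two copies of
    P_3 (k+1 -- 0 -- k+2 and k+3 -- k -- k+4) whose middle vertices are joined
    by a path with k edges. *)
Definition Hrel (k : nat) : rel 'I_(k + 5) :=
  fun i j =>
    match k with
    | 0 => (val i == 0) && (val j != 0)
    | _ => [|| (val j == (val i).+1) && (val j <= k),
               (val i == 0) && ((val j == k.+1) || (val j == k.+2)) |
               (val i == k) && ((val j == k.+3) || (val j == k.+4))]
    end.

Definition Hgraph (k : nat) : sgraph := mkgraph (@Hrel k).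

Definition contains_subgraph (G H : sgraph) : Prop :=
  exists f : H -> G, injective f /\
    forall x y : H, gE x y -> gE (f x) (f y).

(** G -(cap)-> H : H is isomorphic to G^{alpha_1} ∩ ... ∩ G^{alpha_k}, k >= 1,
    alpha_i injective maps of V(G) into a common universe U. *)
Definition si_to (G H : sgraph) : Prop :=
  exists (k : nat) (U : Type) (alpha : 'I_k -> G -> U),
    0 < k /\
    (forall i, injective (alpha i)) /\
    exists f : H -> U,
      injective f /\
      (forall u : U, (forall i, exists v : G, alpha i v = u) <-> exists x : H, f x = u) /\
      (forall x y : H,
          gE x y <-> forall i, exists v w : G, gE v w /\ alpha i v = f x /\ alpha i w = f y).

Definition SiFree (M : seq sgraph) (G : sgraph) : Prop :=
  forall F, List.In F M -> ~ si_to G F.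

(** The class S: forests every component of which is a tree with at most
    three leaves (vertices of degree 1). *)
Definition acyclic (G : sgraph) : Prop :=
  forall s : seq G, uniq s -> 2 < size s -> ~~ cycle (@gE G) s.

Definition deg (G : sgraph) (x : G) : nat := #|[set y | gE x y]|.

Definition tripod_forest (G : sgraph) : Prop :=
  acyclic G /\
  forall x : G, #|[set y | connect (@gE G) x y && (deg y == 1)]| <= 3.

Definition in_Sk (k : nat) (G : sgraph) : Prop :=
  (forall j, 3 <= j <= k -> ~ contains_subgraph G (Cgraph j)) /\
  (forall j, j <= k -> ~ contains_subgraph G (Hgraph j)).

(* Main.v *)
Require Import Defs.
From Stdlib Require List.
From Stdlib Require Import ClassicalEpsilon Classical.
From mathcomp Require Import all_boot.
Set Implicit Arguments. Unset Strict Implicit. Unset Printing Implicit Defensive.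

Lemma contains_trans (A B C : sgraph) :
  contains_subgraph A B -> contains_subgraph B C -> contains_subgraph A C.
Proof.
move=> [f [fi fe]] [g [gi ge]]; exists (f \o g); split.
- exact: inj_comp.
- by move=> x y /ge /fe.
Qed.

Lemma contains_card (A B : sgraph) : contains_subgraph A B -> #|B| <= #|A|.
Proof. by move=> [f [fi _]]; exact: leq_card fi. Qed.

Lemma si_sub (G H : sgraph) : si_to G H -> contains_subgraph G H.
Proof.
move=> [k [U [alpha [k0 [ainj [f [finj [fsurj fedge]]]]]]]].
pose i0 := Ordinal k0.
have ex : forall x : H, exists v : G, alpha i0 v = f x.
  by move=> x; apply: (proj2 (fsurj (f x))); exists x.
pose g x := proj1_sig (constructive_indefinite_description _ (ex x)).
have gP x : alpha i0 (g x) = f x.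
  by rewrite /g; case: constructive_indefinite_description.
exists g; split.
- by move=> x y e; apply: finj; rewrite -!gP e.
- move=> x y /fedge /(_ i0) [v [w [vw [hv hw]]]].
  have -> : g x = v by apply: (ainj i0); rewrite gP hv.
  have -> : g y = w by apply: (ainj i0); rewrite gP hw.
  done.
Qed.

Lemma cycle_sub (F : sgraph) (s : seq F) :
  uniq s -> 2 < size s -> cycle (@gE F) s -> contains_subgraph F (Cgraph (size s)).
Proof.
case: s => [//|x0 s'] us ss cs.
have key : forall i, i < size (x0 :: s') ->
   gE (nth x0 (x0 :: s') i) (nth x0 (x0 :: s') (i.+1 %% size (x0 :: s'))).
  move=> i lti; move: cs; rewrite /cycle => /(pathP x0) /(_ i).
  rewrite size_rcons => /(_ lti).
  have -> : nth x0 (x0 :: rcons s' x0) i = nth x0 (x0 :: s') i.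
    by rewrite -rcons_cons nth_rcons lti.
  rewrite nth_rcons /=.
  case: (ltnP i (size s')) => h.
    by rewrite modn_small //.
  have -> : i = size s' by move: lti => /=; rewrite ltnS => h2; apply/eqP; rewrite eqn_leq h2 h.
  by rewrite eqxx modnn.
exists (fun i : 'I_(size (x0 :: s')) => nth x0 (x0 :: s') i); split.
- by move=> i j /eqP; rewrite nth_uniq // => /eqP /val_inj.
- move=> i j; rewrite /= /symrel => /andP [_ /orP [] /eqP h].
  + by rewrite h; apply: key.
  + by rewrite gE_sym h; apply: key.
Qed.
Definition nb (T : finType) (e : rel T) (x : T) := [set y | e x y].

Lemma two_nb (T : finType) (e : rel T) x y1 y2 :
  e x y1 -> e x y2 -> y1 != y2 -> 1 < #|nb e x|.
Proof. by move=> h1 h2 ne; apply/card_gt1P; exists y1, y2; rewrite !inE h1 h2. Qed.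

Lemma three_nb (T : finType) (e : rel T) x y1 y2 y3 :
  e x y1 -> e x y2 -> e x y3 -> uniq [:: y1; y2; y3] -> 2 < #|nb e x|.
Proof.
move=> h1 h2 h3 u; apply/card_geqP; exists [:: y1; y2; y3]; split => //.
by move=> z; rewrite !inE => /or3P [] /eqP ->.
Qed.

Lemma det_prefix (T : finType) (e : rel T) (Dg : pred T) :
  symmetric e -> (forall v, Dg v -> #|nb e v| <= 2) ->
  forall p q x (W : pred T),
   (forall y z, e x y -> e x z -> ~~ W y -> ~~ W z -> y = z) ->
   path e x p -> path e x q -> uniq (x :: p) -> uniq (x :: q) ->
   (forall v, v \in p -> ~~ W v) -> (forall v, v \in q -> ~~ W v) ->
   (forall v, v \in p -> Dg v) ->
   (exists r, q = p ++ r) \/ (exists r, p = q ++ r).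
Proof.
move=> esy Dg2 p; elim: p => [|y p IH] q x W hx pp pq up uq Wp Wq Dp.
  by left; exists q.
case: q pp pq uq Wq => [|z q] pp pq uq Wq; first by right; exists (y :: p).
move: pp pq => /= /andP [exy pp] /andP [exz pq].
have yz : y = z by apply: hx => //; [apply: Wp | apply: Wq]; rewrite inE eqxx.
subst z.
have : (exists r, q = p ++ r) \/ (exists r, p = q ++ r).
apply: (IH q y (pred1 x)).
- move=> y1 z1 h1 h2 n1 n2; apply/eqP; apply/negPn/negP => ne.
  have : 2 < #|nb e y|.
    apply: (three_nb (y1 := x) (y2 := y1) (y3 := z1)) => //; first by rewrite esy.
    by move: n1 n2; rewrite /= !inE negb_or => n1 n2; rewrite ne eq_sym n1 eq_sym n2.
  by rewrite ltnNge Dg2 // Dp // inE eqxx.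
- exact: pp.
- exact: pq.
- by move: up => /= /andP [_].
- by move: uq => /= /andP [_].
- move=> v vp; move: up; rewrite /= inE negb_or => /andP [/andP [_ xp] _].
  by apply/eqP => ev; subst v; rewrite vp in xp.
- move=> v vp; move: uq; rewrite /= inE negb_or => /andP [/andP [_ xp] _].
  by apply/eqP => ev; subst v; rewrite vp in xp.
- by move=> v vp; apply: Dp; rewrite inE vp orbT.
by case=> [[r ->]|[r ->]]; [left|right]; exists r.
Qed.

Lemma path_conn (T : finType) (e : rel T) x p v : path e x p -> v \in p -> connect e x v.
Proof.
elim: p x => [//|y p IH] x /= /andP [exy pp]; rewrite inE => /orP [/eqP ->|vp].
  exact: connect1.
exact: connect_trans (connect1 exy) (IH _ pp vp).
Qed.

Lemma ext_deg (T : finType) (e : rel T) a p z r :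
  symmetric e -> path e a (p ++ z :: r) -> uniq (a :: p ++ z :: r) -> p != [::] ->
  1 < #|nb e (last a p)|.
Proof.
move=> esy; case/lastP: p => [//|p0 b] pp up _.
rewrite last_rcons.
move: pp; rewrite cat_path rcons_path last_rcons /= => /andP [/andP [_ e1] /andP [e2 _]].
apply: (two_nb (y1 := last a p0) (y2 := z)) => //; first by rewrite esy.
apply/eqP => ez; move: up; rewrite -cat_cons cat_uniq => /and3P [_ /hasPn h _].
have := h z; rewrite inE eqxx => /(_ isT); rewrite -ez.
by rewrite -rcons_cons mem_rcons inE mem_last orbT.
Qed.

Lemma three_ends (T : finType) (e : rel T) a b d :
  symmetric e -> (forall v, connect e a v -> #|nb e v| <= 2) ->
  #|nb e a| <= 1 -> #|nb e b| <= 1 -> #|nb e d| <= 1 ->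
  connect e a b -> connect e a d -> a != b -> a != d -> b = d.
Proof.
move=> esy D2 da db dd /connectP [p0 pp0 eb] /connectP [q0 pq0 ed] ab ad; subst b d.
case: (shortenP pp0) ab db => p pp up _ ab db {pp0 p0}.
case: (shortenP pq0) ad dd => q pq uq _ ad dd {pq0 q0}.
have pn : p != [::] by case: p pp up ab db => //=; rewrite eqxx.
have qn : q != [::] by case: q pq uq ad dd => //=; rewrite eqxx.
have : (exists r, q = p ++ r) \/ (exists r, p = q ++ r).
apply: (@det_prefix T e (connect e a) esy D2 p q a pred0 _ pp pq up uq).
- move=> y z h1 h2 _ _; move/card_le1P: da => /(_ y); rewrite inE => /(_ h1) /(_ z).
  by rewrite !inE h2 => /esym /eqP ->.
- by [].
- by [].
- by move=> v; apply: path_conn pp.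
case=> [[r qe]|[r pe]].
- subst q; case: r pq uq dd ad qn => [|z r] pq uq dd ad qn; first by rewrite cats0.
  have := ext_deg esy pq uq pn; by rewrite ltnNge db.
- subst p; case: r pp up db ab pn => [|z r] pp up db ab pn; first by rewrite cats0.
  have := ext_deg esy pp up qn; by rewrite ltnNge dd.
Qed.

Definition Rm (T : finType) (e : rel T) (c : T) : rel T :=
  fun a b => e a b && (a != c) && (b != c).

Lemma Rm_sym (T : finType) (e : rel T) c : symmetric e -> symmetric (Rm e c).
Proof. by move=> s a b; rewrite /Rm s -!andbA [(a != c) && _]andbC. Qed.

Lemma path_Rm_last (T : finType) (e : rel T) c x p :
  x != c -> path (Rm e c) x p -> last x p != c.
Proof.
elim: p x => [//|y p IH] x xc /= /andP [/andP [/andP [_ _] yc] pp].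
exact: IH.
Qed.

Lemma connect_Rm_neq (T : finType) (e : rel T) c x v :
  x != c -> connect (Rm e c) x v -> v != c.
Proof. by move=> xc /connectP [p pp ->]; exact: (path_Rm_last xc pp). Qed.

Lemma connect_Rm_sub (T : finType) (e : rel T) c x v :
  connect (Rm e c) x v -> connect e x v.
Proof.
apply: connect_sub => a b /andP [/andP [h _] _]; exact: connect1.
Qed.

Lemma nb_Rm_sub (T : finType) (e : rel T) c v : #|nb (Rm e c) v| <= #|nb e v|.
Proof.
by apply: subset_leq_card; apply/subsetP => z; rewrite !inE => /andP [/andP [->]].
Qed.

Lemma nb_Rm_c (T : finType) (e : rel T) c v : e v c -> #|nb (Rm e c) v| < #|nb e v|.
Proof.
move=> evc; rewrite (cardsD1 c (nb e v)) inE evc add1n ltnS.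
by apply: subset_leq_card; apply/subsetP => z; rewrite !inE => /andP [/andP [-> _] ->].
Qed.

Lemma nb0_conn (T : finType) (e : rel T) x v : #|nb e x| = 0 -> connect e x v -> v = x.
Proof.
move=> n0 /connectP [[|y p] pp ->] //.
move: pp => /= /andP [exy _].
by move/eqP: n0; rewrite cards_eq0 => /eqP n0; have := in_set0 y; rewrite -n0 inE exy.
Qed.

Lemma path_all_Rm (T : finType) (e : rel T) c x p :
  path e x p -> (forall v, v \in x :: p -> v != c) -> path (Rm e c) x p.
Proof.
elim: p x => [//|y p IH] x /= /andP [exy pp] h.
rewrite /Rm exy h ?inE ?eqxx // h ?inE ?eqxx ?orbT //=.
by apply: IH => // v vp; apply: h; rewrite inE vp !orbT.
Qed.

Lemma degE (F : sgraph) (v : F) : deg v = #|nb (@gE F) v|.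
Proof. by []. Qed.

Lemma leaves3 (F : sgraph) (x : F) :
  (forall y, connect (@gE F) x y -> deg y <= 3) ->
  (forall y z, connect (@gE F) x y -> connect (@gE F) x z -> 3 <= deg y -> 3 <= deg z -> y = z) ->
  #|[set y | connect (@gE F) x y && (deg y == 1)]| <= 3.
Proof.
move=> D3 U3; rewrite leqNgt; apply/negP => /card_geqP [s [us ss sL]].
have Lp : forall l, l \in s -> connect (@gE F) x l /\ deg l = 1.
  by move=> l /sL; rewrite inE => /andP [? /eqP].
have csym : connect_sym (@gE F) := sym_connect_sym (@gE_sym F).
case: (boolP [exists c, connect (@gE F) x c && (3 <= deg c)]).
- case/existsP => c /andP [xc dc].
  have D2 : forall v, connect (@gE F) x v -> v != c -> deg v <= 2.
    move=> v xv vc; rewrite leqNgt; apply/negP => dv.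
    by rewrite (U3 v c) ?eqxx in vc.
  pose R := Rm (@gE F) c.
  have lc : forall l, l \in s -> l != c.
    move=> l /Lp [_ dl]; apply/eqP => e; by rewrite -e dl in dc.
  have ex : forall l, l \in s -> exists n, @gE F c n && connect R n l.
    move=> l ls; have [xl dl] := Lp l ls.
    have cl : connect (@gE F) c l by apply: connect_trans xl; rewrite csym.
    case/connectP: cl => p0 pp0 el.
    case: (shortenP pp0) el => p pp up _ el {pp0 p0}.
    case: p pp up el => [|n p] pp up el; first by have := lc l ls; rewrite el /= eqxx.
    move: pp => /= /andP [cn pp]; exists n; rewrite cn /=.
    apply/connectP; exists p => //.
    apply: path_all_Rm => // v vp; apply/eqP => vc; subst v.
    by move: up; rewrite /= vp.
  have inj : forall n l l', @gE F c n -> l \in s -> l' \in s ->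
      connect R n l -> connect R n l' -> l = l'.
    move=> n l l' cn ls l's nl nl'.
    have nc : n != c by apply/eqP => e; rewrite e (gE_irr c) in cn.
    have xn : connect (@gE F) x n by apply: connect_trans xc (connect1 cn).
    have dn : deg n <= 2 by apply: D2.
    have Rn : #|nb R n| < deg n by apply: nb_Rm_c; rewrite gE_sym.
    have [_ dl] := Lp l ls; have [_ dl'] := Lp l' l's.
    case: (eqVneq l n) => [ln|ln].
      subst l; rewrite dl in Rn; symmetry; apply: nb0_conn nl'.
      by move: Rn; case: #|_|.
    case: (eqVneq l' n) => [l'n|l'n].
      subst l'; rewrite dl' in Rn; apply: nb0_conn nl.
      by move: Rn; case: #|_|.
    apply: (three_ends (e := R) (a := n)) => //.
    + exact: Rm_sym (@gE_sym F).
    + move=> v nv; apply: leq_trans (nb_Rm_sub _ _ _) _; rewrite -degE.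
      apply: D2; first by apply: connect_trans xn (connect_Rm_sub nv).
      exact: connect_Rm_neq nv.
    + by rewrite -ltnS (leq_trans Rn dn).
    + by apply: leq_trans (nb_Rm_sub _ _ _) _; rewrite -degE dl.
    + by apply: leq_trans (nb_Rm_sub _ _ _) _; rewrite -degE dl'.
    + by rewrite eq_sym.
    + by rewrite eq_sym.
  pose f l := odflt c [pick n | @gE F c n && connect R n l].
  have fP : forall l, l \in s -> @gE F c (f l) && connect R (f l) l.
    move=> l ls; rewrite /f; case: pickP => [n //|none].
    by have [n h] := ex l ls; rewrite none in h.
  have : 4 <= deg c.
    apply/card_geqP; exists (map f s); split.
    + rewrite map_inj_in_uniq // => l l' ls l's e.
      have /andP [cn nl] := fP l ls; have /andP [_ nl'] := fP l' l's.
      by apply: (inj (f l)) => //; rewrite e.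
    + by rewrite size_map.
    + by move=> z /mapP [l ls ->]; rewrite inE; case/andP: (fP l ls).
  by rewrite leqNgt ltnS D3.
- rewrite negb_exists => /forallP nc.
  have D2 : forall v, connect (@gE F) x v -> deg v <= 2.
    by move=> v xv; have := nc v; rewrite xv /= -ltnNge ltnS.
  case: s us ss sL Lp => [|l1 [|l2 [|l3 s]]] //= us ss sL Lp.
  have [x1 d1] := Lp l1 (mem_head _ _).
  have [x2 d2] : connect (@gE F) x l2 /\ deg l2 = 1 by apply: Lp; rewrite !inE eqxx orbT.
  have [x3 d3] : connect (@gE F) x l3 /\ deg l3 = 1 by apply: Lp; rewrite !inE eqxx !orbT.
  have c1 : forall v, connect (@gE F) x v -> connect (@gE F) l1 v.
    by move=> v xv; apply: connect_trans xv; rewrite csym.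
  have e23 : l2 = l3.
    apply: (three_ends (e := @gE F) (a := l1)) => //.
    + exact: gE_sym.
    + by move=> v /(connect_trans x1) /D2.
    + by rewrite -degE d1.
    + by rewrite -degE d2.
    + by rewrite -degE d3.
    + exact: c1.
    + exact: c1.
    + by move: us; rewrite !inE => /andP [/norP [] ].
    + by move: us; rewrite !inE => /andP [/norP [_ /norP []]].
  by move: us; rewrite e23 /= mem_head /= andbF.
Qed.
Lemma H0_sub (F : sgraph) (y : F) : 3 < deg y -> contains_subgraph F (Hgraph 0).
Proof.
move=> dy; have /card_geqP [s [us ss sN]] : 4 <= #|[set z | @gE F y z]| by [].
have ys : y \notin s by apply/negP => /sN; rewrite inE gE_irr.
have uS : uniq (y :: s) by rewrite /= ys us.
have sS : size (y :: s) = 0 + 5 by rewrite /= ss.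
exists (fun i : 'I_(0+5) => nth y (y :: s) i); split.
- by move=> i j /eqP; rewrite nth_uniq ?sS // => /eqP /val_inj.
- have key : forall i j : 'I_(0+5), Hrel i j -> gE (nth y (y :: s) i) (nth y (y :: s) j).
    move=> [i hi] [j hj]; rewrite /Hrel /= => /andP [/eqP -> ].
    case: j hj => [//|j] hj _ /=.
    have : nth y s j \in s by rewrite mem_nth // ss -ltnS.
    by move/sN; rewrite inE.
  move=> i j; rewrite /= /symrel => /andP [_ /orP [/key //|/key]]; by rewrite gE_sym.
Qed.

Lemma Hk_build (F : sgraph) (k : nat) (S : seq F) (x0 : F) :
  uniq S -> size S = k.+1 + 5 ->
  (forall i, i < k.+1 -> gE (nth x0 S i) (nth x0 S i.+1)) ->
  gE (nth x0 S 0) (nth x0 S k.+2) -> gE (nth x0 S 0) (nth x0 S k.+3) ->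
  gE (nth x0 S k.+1) (nth x0 S k.+4) -> gE (nth x0 S k.+1) (nth x0 S k.+4.+1) ->
  contains_subgraph F (Hgraph k.+1).
Proof.
move=> uS sS hp h2 h3 h4 h5.
exists (fun i : 'I_(k.+1 + 5) => nth x0 S i); split.
- by move=> i j /eqP; rewrite nth_uniq ?sS // => /eqP /val_inj.
- have key : forall i j : 'I_(k.+1 + 5), Hrel i j -> gE (nth x0 S i) (nth x0 S j).
    move=> [i hi] [j hj]; rewrite /Hrel /= => /or3P
      [/andP [/eqP -> jk] | /andP [/eqP -> /orP [] /eqP ->] | /andP [/eqP -> /orP [] /eqP ->]] //.
    by apply: hp.
  move=> i j; rewrite /= /symrel => /andP [_ /orP [/key //|/key]]; by rewrite gE_sym.
Qed.

Lemma rev_pathS (T : finType) (e : rel T) x p : symmetric e -> path e x p ->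
  [/\ path e (last x p) (rev (belast x p)), last (last x p) (rev (belast x p)) = x
   & size (rev (belast x p)) = size p].
Proof.
move=> es pp; split.
- by rewrite rev_path; apply: sub_path pp => a b /=; rewrite es.
- by case: p {pp} => [//|y p] /=; rewrite rev_cons last_rcons.
- by rewrite size_rev size_belast.
Qed.

Lemma first_nb (T : finType) (e : rel T) x p :
  path e x p -> (forall q, path e x q -> last x q = last x p -> size p <= size q) ->
  forall a, e x a -> a \in p -> a = head x p.
Proof.
move=> pp mn a xa ap; case/splitPr: ap pp mn => pl pr pp mn.
have := mn (a :: pr).
rewrite /= xa last_cat /=.
move: pp; rewrite cat_path => /andP [_ /= /andP [_ ->]] /(_ isT erefl).
rewrite size_cat /= addnS ltnS -{2}(add0n (size pr)) leq_add2r leqn0.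
by case: pl {mn}.
Qed.

Lemma Hk_sub (F : sgraph) (u v : F) : acyclic F -> u != v -> connect (@gE F) u v ->
  2 < deg u -> 2 < deg v -> exists k, contains_subgraph F (Hgraph k).
Proof.
move=> ac uv cuv du dv.
pose P n := [exists t : n.-tuple F, path (@gE F) u t && (last u t == v)].
have exP : exists n, P n.
  case/connectP: cuv => p pp ev; exists (size p); apply/existsP; exists (in_tuple p).
  by rewrite pp ev eqxx.
case: (ex_minnP exP) => k /existsP [t /andP [pt /eqP lt]] kmin.
have mnP : forall q, path (@gE F) u q -> last u q = v -> k <= size q.
  move=> q pq lq; apply: kmin; apply/existsP; exists (in_tuple q); by rewrite pq lq eqxx.
case: (shortenP pt) lt => p pp up sub lp.
have sp : size p = k.
  apply/eqP; rewrite eqn_leq mnP // andbT.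
  rewrite -(size_tuple t); apply: uniq_leq_size sub; by case/andP: up.
have mnp : forall q, path (@gE F) u q -> last u q = last u p -> size p <= size q.
  by move=> q pq lq; rewrite sp; apply: mnP => //; rewrite lq.
clear sub pt t kmin mnP P exP.
have es := @gE_sym F.
have [ps ls ss] := rev_pathS es pp.
set s := rev (belast u p) in ps ls ss.
rewrite lp in ps ls.
have mns : forall q, path (@gE F) v q -> last v q = last v s -> size s <= size q.
  move=> q pq lq; have [pq' lq' sq'] := rev_pathS es pq.
  rewrite ss -sq'; apply: mnp; first by rewrite lq ls in pq'.
  by rewrite lp; move: lq'; rewrite lq ls.
have pn : p != [::] by apply/eqP => e; rewrite e /= in lp; rewrite lp eqxx in uv.
have sn : s != [::] by rewrite -size_eq0 ss size_eq0.
have hd : forall (x : F) (q : seq F), path (@gE F) x q -> q != [::] -> gE x (head x q).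
  by move=> x [|y q] //= /andP [].
have nu : forall w, gE u w -> w != head u p -> w \notin u :: p.
  move=> w uw wh; rewrite inE negb_or; apply/andP; split.
    by apply/eqP => e; rewrite e gE_irr in uw.
  by apply/negP => wp; rewrite (first_nb pp mnp uw wp) eqxx in wh.
have nv : forall w, gE v w -> w != head v s -> w \notin u :: p.
  move=> w vw wh; apply/negP; rewrite lastI mem_rcons inE lp => /orP [/eqP e|wb].
    by rewrite e gE_irr in vw.
  have ws : w \in s by rewrite mem_rev.
  by rewrite (first_nb ps mns vw ws) eqxx in wh.
have noc : forall w, gE u w -> gE v w -> w \notin u :: p -> False.
  move=> w uw vw wn.
  have hu : uniq (u :: rcons p w) by rewrite -rcons_cons rcons_uniq wn up.
  have hs : 2 < size (u :: rcons p w).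
    by rewrite /= size_rcons; move: pn; rewrite -size_eq0; case: (size p).
  have hc : cycle (@gE F) (u :: rcons p w).
    rewrite /cycle rcons_path rcons_path pp last_rcons lp vw /=.
    by rewrite es.
  by move: (ac _ hu hs); rewrite hc.
have [a [b [ha hb ab]]] : exists a b, [/\ a \in [set w | gE u w] :\ head u p,
     b \in [set w | gE u w] :\ head u p & a != b].
  apply/card_gt1P; move: du; rewrite /deg (cardsD1 (head u p)) inE hd // add1n ltnS.
have [c [d [hc hd' cd]]] : exists c d, [/\ c \in [set w | gE v w] :\ head v s,
     d \in [set w | gE v w] :\ head v s & c != d].
  apply/card_gt1P; move: dv; rewrite /deg (cardsD1 (head v s)) inE hd // add1n ltnS.
move: ha hb hc hd'; rewrite !inE => /andP [ah ua] /andP [bh ub] /andP [ch vc] /andP [dh vd].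
have na := nu _ ua ah; have nb := nu _ ub bh.
have nc := nv _ vc ch; have nd := nv _ vd dh.
have dist : forall w w', gE u w -> gE v w' -> w \notin u :: p -> w != w'.
  by move=> w w' uw vw' wn; apply/eqP => e; subst w'; exact: (noc w).
have uS : uniq ((u :: p) ++ [:: a; b; c; d]).
  rewrite cat_uniq up /= (negbTE na) (negbTE nb) (negbTE nc) (negbTE nd) /=.
  rewrite !inE !negb_or ab cd (dist a c) ?(dist a d) ?(dist b c) ?(dist b d) //.
case: p pp up lp mnp pn uS na nb nc nd {sp ps ls ss sn mns nu nv noc dist ah bh ch dh s}
  => [//|p1 p'] pp up lp mnp _ uS na nb nc nd.
exists (size p').+1.
set S := (_ ++ _) in uS *.
have hoff : forall j, nth u S (j + (size p').+2) = nth u [:: a; b; c; d] j.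
  by move=> j; rewrite /S nth_cat /= ltnNge leq_addl /= addnK.
have hv : nth u S (size p').+1 = v by rewrite /S nth_cat /= ltnSn -lp -nth_last.
have h0 : nth u S 0 = u by [].
apply: (@Hk_build F (size p') S u uS).
- by rewrite /S /= size_cat /= addSn -addnS.
- move=> i hi.
  have h1 : i < (size p').+2 by apply: ltnW; rewrite ltnS.
  rewrite /S !nth_cat /= h1 ltnS hi.
  by move/pathP: pp => /(_ u i hi).
- by rewrite h0 -[(size p').+2]/(0 + (size p').+2) hoff.
- by rewrite h0 -[(size p').+3]/(1 + (size p').+2) hoff.
- by rewrite hv -[(size p').+4]/(2 + (size p').+2) hoff.
- by rewrite hv -[(size p').+4.+1]/(3 + (size p').+2) hoff.
Qed.

Lemma not_tripod (F : sgraph) : ~ tripod_forest F ->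
  (exists j, 3 <= j /\ contains_subgraph F (Cgraph j)) \/
  (exists j, contains_subgraph F (Hgraph j)).
Proof.
move=> nt.
case: (classic (exists s : seq F, [&& uniq s, 2 < size s & cycle (@gE F) s])).
  by move=> [s /and3P [us ss cs]]; left; exists (size s); split => //; exact: cycle_sub.
move=> nc.
have ac : acyclic F.
  move=> s us ss; apply/negP => cs; apply: nc; exists s; by rewrite us ss cs.
case: (classic (exists x : F,
   3 < #|[set y | connect (@gE F) x y && (deg y == 1)]|)); last first.
  move=> nx; exfalso; apply: nt; split => // x.
  by rewrite leqNgt; apply/negP => h; apply: nx; exists x.
move=> [x hx]; right.
have csym : connect_sym (@gE F) := sym_connect_sym (@gE_sym F).
case: (classic (exists y, connect (@gE F) x y /\ 3 < deg y)).
  by move=> [y [_ dy]]; exists 0; exact: H0_sub dy.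
move=> n4.
case: (classic (exists y z, [/\ connect (@gE F) x y, connect (@gE F) x z,
                                2 < deg y, 2 < deg z & y != z])).
  move=> [y [z [xy xz dy dz yz]]].
  apply: (Hk_sub (u := y) (v := z)) => //.
  by apply: connect_trans xz; rewrite csym.
move=> n3; exfalso.
suff : #|[set y | connect (@gE F) x y && (deg y == 1)]| <= 3 by rewrite leqNgt hx.
apply: leaves3.
- move=> y xy; rewrite leqNgt; apply/negP => dy; apply: n4; by exists y.
- move=> y z xy xz dy dz; apply/eqP/negPn/negP => yz; apply: n3; by exists y, z.
Qed.

Lemma bound_M (M : seq sgraph) : exists N, forall F, List.In F M -> #|F| <= N.
Proof.
elim: M => [|F M [N hN]]; first by exists 0.
exists (maxn #|F| N) => G /= [<-|/hN h]; first exact: leq_maxl.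
exact: leq_trans h (leq_maxr _ _).
Qed.

Theorem mainTheorem12 (M : seq sgraph) :
  (forall F, List.In F M -> ~ tripod_forest F) ->
  exists r : nat, 3 <= r /\ forall G : sgraph, in_Sk r G -> SiFree M G.
Proof.
move=> hM; have [N hN] := bound_M M.
exists (N + 3); split; first by rewrite leq_addl.
move=> G [hC hH] F FM /si_sub sGF.
have FN := hN F FM.
case: (not_tripod (hM F FM)) => [[j [j3 sFj]]|[j sFj]].
- apply: (hC j); last exact: contains_trans sGF sFj.
  have h : #|'I_j| <= #|F| := contains_card sFj.
  rewrite card_ord in h.
  by rewrite j3 /= (leq_trans h) // (leq_trans FN) // leq_addr.
- apply: (hH j); last exact: contains_trans sGF sFj.
  have h : #|'I_(j + 5)| <= #|F| := contains_card sFj.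
  rewrite card_ord in h.
  exact: leq_trans (leq_trans (leq_addr 5 j) h) (leq_trans FN (leq_addr 3 N)).
Qed.
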